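(* For $i=1,\dots,m$ let $n_i\in\mathbb N$ and let $f_i:\mathbb{R}^{n_i}\to(-\infty,+\infty]$ be lower semicontinuous and variationally convex at $\bar x_i$ for $\bar v_i\in\partial f_i(\bar x_i)$. Then the separable sum $f:=f_1\oplus\cdots\oplus f_m$, $f(x_1,\dots,x_m)=\sum_{i=1}^mf_i(x_i)$, is variationally convex at $\bar x:=(\bar x_1,\dots,\bar x_m)$ for $\bar v:=(\bar v_1,\dots,\bar v_m)\in\partial f(\bar x)$.
   Context: $\partial$ is the limiting (Mordukhovich) subdifferential. A lsc $h$ is variationally convex at $\bar x$ for $\bar v\in\partial h(\bar x)$ if for some convex neighborhood $U\times V$ of $(\bar x,\bar v)$ there are a lsc convex function $\varphi\le h$ on $U$ and $\varepsilon>0$ such that $[U_\varepsilon\times V]\cap\operatorname{gph}\partial h=[U\times V]\cap\operatorname{gph}\partial\varphi$ and $h(x)=\varphi(x)$ at the common elements $(x,v)$, where $U_\varepsilon=\{x\in U:h(x)<h(\bar x)+\varepsilon\}$. *)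

(* Defs.v *)
From HB Require Import structures.
From mathcomp Require Import all_boot all_order all_algebra.
From mathcomp Require Import reals constructive_ereal.

Set Implicit Arguments.
Unset Strict Implicit.
Unset Printing Implicit Defensive.

Import Order.TTheory GRing.Theory Num.Theory.
Local Open Scope ring_scope.

(* R^I, for a finite index type I, with its Euclidean structure.
   R^n is ('I_n -> R). *)
Section VarConv.
Variables (R : realType) (I : finType).

Definition ip (x y : I -> R) : R := \sum_(j : I) x j * y j.
Definition enorm (x : I -> R) : R := Num.sqrt (ip x x).
Definition vsub (x y : I -> R) : I -> R := fun j => x j - y j.
Definition vcomb (t : R) (x y : I -> R) : I -> R :=
  fun j => t * x j + (1 - t) * y j.

Definition is_nbhd (U : (I -> R) -> Prop) (x : I -> R) : Prop :=
  exists2 r : R, 0 < r & forall y, enorm (vsub y x) < r -> U y.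

Definition convex_set (U : (I -> R) -> Prop) : Prop :=
  forall x y (t : R), U x -> U y -> 0 <= t <= 1 -> U (vcomb t x y).

Definition proper_valued (h : (I -> R) -> \bar R) : Prop :=
  forall x, h x != -oo%E.

Definition lsc (h : (I -> R) -> \bar R) : Prop :=
  forall x (c : R), (c%:E < h x)%E ->
    exists2 d : R, 0 < d & forall y, enorm (vsub y x) < d -> (c%:E < h y)%E.

Definition convex_fun (h : (I -> R) -> \bar R) : Prop :=
  forall x y (t : R), 0 < t < 1 ->
    (h (vcomb t x y) <= t%:E * h x + (1 - t)%:E * h y)%E.

Definition reg_subdiff (h : (I -> R) -> \bar R) (x v : I -> R) : Prop :=
  h x \is a fin_num /\
  forall eps : R, 0 < eps -> exists2 d : R, 0 < d &
    forall y, enorm (vsub y x) < d ->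
      (h x + (ip v (vsub y x) - eps * enorm (vsub y x))%:E <= h y)%E.

Definition seq_cvg (u : nat -> I -> R) (l : I -> R) : Prop :=
  forall e : R, 0 < e -> exists N, forall k, (N <= k)%N -> enorm (vsub (u k) l) < e.

Definition lim_subdiff (h : (I -> R) -> \bar R) (x v : I -> R) : Prop :=
  h x \is a fin_num /\
  exists xk vk : nat -> I -> R,
    [/\ seq_cvg xk x,
        (forall e : R, 0 < e -> exists N, forall k, (N <= k)%N ->
            (`|h (xk k) - h x| < e%:E)%E),
        (forall k, reg_subdiff h (xk k) (vk k)) &
        seq_cvg vk v].

Definition var_convex (h : (I -> R) -> \bar R) (xb vb : I -> R) : Prop :=
  lsc h /\ lim_subdiff h xb vb /\
  exists (U V : (I -> R) -> Prop) (phi : (I -> R) -> \bar R),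
  exists2 eps : R, 0 < eps &
    [/\ (convex_set U /\ is_nbhd U xb /\ convex_set V /\ is_nbhd V vb),
        (proper_valued phi /\ lsc phi /\ convex_fun phi),
        (forall x, U x -> (phi x <= h x)%E),
        (forall x v,
            (U x /\ (h x < h xb + eps%:E)%E) /\ V v /\ lim_subdiff h x v
            <-> U x /\ V v /\ lim_subdiff phi x v) &
        (forall x v, U x -> (h x < h xb + eps%:E)%E -> V v ->
            lim_subdiff h x v -> h x = phi x)].

End VarConv.

(* R^{n_1} x ... x R^{n_m} is identified with R^{ {i : 'I_m & 'I_(n i)} } *)
Definition sep_join (R : realType) (m : nat) (n : 'I_m -> nat)
  (x : forall i : 'I_m, 'I_(n i) -> R) : {i : 'I_m & 'I_(n i)} -> R :=
  fun p => x (tag p) (tagged p).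

Definition sep_sum (R : realType) (m : nat) (n : 'I_m -> nat)
  (f : forall i : 'I_m, ('I_(n i) -> R) -> \bar R)
  (x : {i : 'I_m & 'I_(n i)} -> R) : \bar R :=
  (\sum_(i < m) f i (fun j => x (Tagged (fun i => 'I_(n i)) j)))%E.

(* Main.v *)
Require Import Defs.
From Stdlib Require Import FunctionalExtensionality ClassicalEpsilon.
From HB Require Import structures.
From mathcomp Require Import all_boot all_order all_algebra.
From mathcomp Require Import reals constructive_ereal ring lra.
Set Implicit Arguments.
Unset Strict Implicit.
Unset Printing Implicit Defensive.
Import Order.TTheory GRing.Theory Num.Theory.
Local Open Scope ring_scope.

Section A.
Variables (R : realType) (I : finType).
Implicit Types (x y a b : I -> R).

Lemma ip_ge0 x : 0 <= ip x x.
Proof. by apply: sumr_ge0 => j _; rewrite -expr2 sqr_ge0. Qed.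

Lemma enorm_ge0 x : 0 <= enorm x.
Proof. exact: sqrtr_ge0. Qed.

Lemma sq_le_ip x j : x j * x j <= ip x x.
Proof.
rewrite /ip (bigD1 j) //= lerDl; apply: sumr_ge0 => k _.
by rewrite -expr2 sqr_ge0.
Qed.

Lemma abs_le_enorm x j : `|x j| <= enorm x.
Proof.
rewrite -sqrtr_sqr /enorm ler_sqrt ?ip_ge0 //.
by rewrite expr2 sq_le_ip.
Qed.

Lemma enorm_le_sumabs x : enorm x <= \sum_j `|x j|.
Proof.
have S0 : 0 <= \sum_j `|x j| by apply: sumr_ge0 => j _.
suff : enorm x <= Num.sqrt ((\sum_j `|x j|) ^+ 2) by rewrite sqrtr_sqr ger0_norm.
rewrite /enorm ler_sqrt ?sqr_ge0 // expr2 mulr_suml /ip; apply: ler_sum => j _.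
have -> : x j * x j = `|x j| * `|x j|.
  by rewrite -normrM ger0_norm // -expr2 sqr_ge0.
apply: ler_wpM2l => //.
by rewrite (bigD1 j) //= lerDl; apply: sumr_ge0.
Qed.

Lemma ip_abs a b : `|ip a b| <= \sum_j `|a j| * `|b j|.
Proof.
by apply: le_trans (ler_norm_sum _ _ _) _; apply: ler_sum => j _; rewrite normrM.
Qed.

Lemma vsub_vcomb t y x : vsub (vcomb t y x) x = fun j => t * vsub y x j.
Proof. by apply: functional_extensionality => j; rewrite /vsub /vcomb; ring. Qed.

Lemma enorm_scale t a : 0 <= t -> enorm (fun j => t * a j) = t * enorm a.
Proof.
move=> t0; rewrite /enorm /ip.
have -> : \sum_j t * a j * (t * a j) = t ^+ 2 * \sum_j a j * a j.
  by rewrite mulr_sumr; apply: eq_bigr => j _; ring.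
by rewrite sqrtrM ?sqr_ge0 // sqrtr_sqr ger0_norm.
Qed.

Lemma ip_scale t a b : ip a (fun j => t * b j) = t * ip a b.
Proof. by rewrite /ip mulr_sumr; apply: eq_bigr => j _; ring. Qed.

Lemma convex_subgrad (phi : (I -> R) -> \bar R) x v :
  proper_valued phi -> convex_fun phi -> reg_subdiff phi x v ->
  forall y, (phi x + (ip v (vsub y x))%:E <= phi y)%E.
Proof.
move=> hp hc [fx hreg] y.
case Ey : (phi y) => [b| |]; last by move: (hp y); rewrite Ey.
  2: by rewrite leey.
rewrite -(fineK fx); set a := fine (phi x); set c := ip v (vsub y x).
rewrite -EFinD lee_fin leNgt; apply/negP => hlt.
set g := a + c - b.
have g0 : 0 < g by rewrite /g; lra.
set D := enorm (vsub y x).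
have D0 : 0 <= D := enorm_ge0 _.
set eps := g / (2 * (D + 1)).
have eps0 : 0 < eps by rewrite /eps divr_gt0 //; lra.
have [d d0 hd] := hreg eps eps0.
set t := Num.min (1 / 2) (d / (2 * (D + 1))).
have t0 : 0 < t by rewrite /t lt_min; apply/andP; split; [lra| rewrite divr_gt0 //; lra].
have t1 : t < 1 by rewrite /t gt_min; apply/orP; left; lra.
have tD : t * D < d.
  have : t <= d / (2 * (D + 1)) by rewrite /t ge_min lexx orbT.
  rewrite ler_pdivlMr; last by lra.
  move=> h; nra.
have := hd (vcomb t y x).
rewrite vsub_vcomb (enorm_scale _ (ltW t0)) => /(_ tD).
rewrite ip_scale => h1.
have := hc y x t; rewrite t0 t1 Ey -(fineK fx) -/a /= => /(_ isT) h2.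
have := le_trans h1 h2.
rewrite -(fineK fx) -/a -EFinD -EFinM -EFinM -EFinD lee_fin => h3.
move: h3; rewrite -/c -/D => h3.
have h4 : t * (c - eps * D - (b - a)) <= 0.
  have -> : t * (c - eps * D - (b - a)) = (a + (t * c - eps * (t * D))) - (t * b + (1 - t) * a) by ring.
  lra.
have h5 : c - eps * D - (b - a) <= 0 by rewrite -(pmulr_rle0 _ t0).
have h6 : eps * D <= g / 2.
  rewrite /eps mulrAC ler_pdivrMr; last by lra.
  have -> : g / 2 * (2 * (D + 1)) = g * D + g by field.
  lra.
rewrite /g in h6 g0; move: h5 h6 g0; generalize (eps * D) => e.
clear; lra.
Qed.

Lemma abs_le_sum (w : I -> R) j : `|w j| <= \sum_k `|w k|.
Proof. by rewrite (bigD1 j) //= lerDl; apply: sumr_ge0. Qed.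

Lemma ereal_abs_lt (u w : \bar R) (e : R) : u \is a fin_num -> w \is a fin_num ->
  (`|u - w| < e%:E)%E -> `|fine u - fine w| < e.
Proof.
by move=> fu fw; rewrite -(fineK fu) -(fineK fw) -EFinB /= lte_fin.
Qed.

Lemma convex_attentive (phi : (I -> R) -> \bar R) xb vb :
  proper_valued phi -> convex_fun phi -> phi xb \is a fin_num ->
  forall e : R, 0 < e -> exists2 s : R, 0 < s & forall x v,
    (forall j, `|x j - xb j| < s) -> (forall j, `|v j - vb j| < s) ->
    lim_subdiff phi x v -> (phi x < phi xb + e%:E)%E.
Proof.
move=> hp hc fxb e e0.
set M := \sum_j `|vb j|.
have M0 : 0 <= M by apply: sumr_ge0.
set C : R := #|I|%:R.
have C0 : 0 <= C by rewrite /C ler0n.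
set s := Num.min 1 (e / (4 * (C + 1) * (M + 2))).
have den0 : 0 < 4 * (C + 1) * (M + 2) by rewrite !mulr_gt0 //; lra.
have s0 : 0 < s by rewrite /s lt_min ltr01 divr_gt0.
exists s => // x v hx hv [fx [xk [vk [cx ca creg cv]]]].
have [N1 hN1] := cx s s0.
have [N2 hN2] := cv s s0.
have e20 : 0 < e / 2 by lra.
have [N3 hN3] := ca _ e20.
set k := maxn (maxn N1 N2) N3.
have k1 : (N1 <= k)%N by rewrite /k !leq_max leqnn.
have k2 : (N2 <= k)%N by rewrite /k !leq_max leqnn orbT.
have k3 : (N3 <= k)%N by rewrite /k !leq_max leqnn orbT.
have h1 := hN1 k k1. have h2 := hN2 k k2. have h3 := hN3 k k3.
have [fxk _] := creg k.
have hsub := convex_subgrad hp hc (creg k) xb.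
have h3' := ereal_abs_lt fxk fx h3.
rewrite -(fineK fx) -(fineK fxb) -EFinD lte_fin.
move: hsub; rewrite -(fineK fxk) -(fineK fxb) -EFinD lee_fin => hsub.
have s1 : s <= 1 by rewrite /s ge_min lexx.
have s2 : s <= e / (4 * (C + 1) * (M + 2)) by rewrite /s ge_min lexx orbT.
have hip : - ip (vk k) (vsub xb (xk k)) <= e / 2.
  suff hn : `|ip (vk k) (vsub xb (xk k))| <= e / 2.
    by apply: le_trans hn; rewrite -normrN ler_norm.
  apply: le_trans (ip_abs _ _) _.
  apply: le_trans (_ : \sum_(j : I) ((M + 2) * (2 * s)) <= _).
    apply: ler_sum => j _.
    have a1 := le_lt_trans (abs_le_enorm (vsub (xk k) x) j) h1.
    have a2 := le_lt_trans (abs_le_enorm (vsub (vk k) v) j) h2.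
    have a3 : `|vb j| <= M := abs_le_sum vb j.
    have a4 := hx j. have a5 := hv j.
    rewrite /vsub in a1 a2 *.
    apply: ler_pM; rewrite ?normr_ge0 //.
      have : `|vk k j| <= `|vk k j - v j| + `|v j - vb j| + `|vb j|.
        have := ler_normD (vk k j - vb j) (vb j); rewrite subrK => hh.
        apply: le_trans hh _; rewrite lerD2r; exact: ler_distD.
      lra.
    have : `|xb j - xk k j| <= `|xb j - x j| + `|x j - xk k j| by apply: ler_distD.
    rewrite (distrC (xb j) (x j)) (distrC (x j) (xk k j)); lra.
  rewrite sumr_const -mulr_natl -/C.
  have : s * (4 * (C + 1) * (M + 2)) <= e by rewrite -ler_pdivlMr.
  nra.
move: h3' hsub hip; rewrite /=.
generalize (ip (vk k) (vsub xb (xk k))) => q.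
move=> hc' ha hb; rewrite ltr_norml in hc'; lra.
Qed.

End A.

Lemma eventually_all (I : finType) (P : I -> nat -> Prop) :
  (forall i, exists N, forall k, (N <= k)%N -> P i k) ->
  exists N, forall k, (N <= k)%N -> forall i, P i k.
Proof.
move=> H.
pose N i := proj1_sig (constructive_indefinite_description _ (H i)).
exists (\max_i N i)%N => k hk i.
apply: (proj2_sig (constructive_indefinite_description _ (H i))).
exact: leq_trans (@leq_bigmax _ (fun i => N i) i) hk.
Qed.

Lemma dchoice (I : Type) (A : I -> Type) (P : forall i, A i -> Prop) :
  (forall i, exists a, P i a) -> exists f : (forall i, A i), forall i, P i (f i).
Proof.
move=> H; exists (fun i => proj1_sig (constructive_indefinite_description _ (H i))).
move=> i; exact: (proj2_sig (constructive_indefinite_description _ (H i))).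
Qed.

Lemma min_radius (R : realType) (I : finType) (D : I -> R) :
  (forall i, 0 < D i) -> exists2 d : R, 0 < d & forall i, d <= D i.
Proof.
move=> hD; exists (\big[Num.min/1]_i D i).
  by elim/big_ind: _ => // a b ha hb; rewrite lt_min ha hb.
by move=> i; rewrite (bigD1 i) //= ge_min lexx.
Qed.

Lemma fin_abs_lt (R : realType) (u w : \bar R) (e : R) : w \is a fin_num ->
  (`|u - w| < e%:E)%E -> u \is a fin_num.
Proof. by case: w => // w _; case: u. Qed.

Section D.
Variables (R : realType) (m : nat) (n : 'I_m -> nat).
Local Notation T := {i : 'I_m & 'I_(n i)}.
Implicit Types (x y : T -> R).

Definition blk x (i : 'I_m) : 'I_(n i) -> R :=
  fun j => x (Tagged (fun i => 'I_(n i)) j).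
Arguments blk x i : clear implicits.

Lemma ip_sig x y : ip x y = \sum_i ip (blk x i) (blk y i).
Proof.
rewrite /ip /blk.
have := (@sig_big_dep R 0 +%R _ (fun i => 'I_(n i)) xpredT (fun i => xpredT)
  (fun i j => x (Tagged (fun i => 'I_(n i)) j) * y (Tagged (fun i => 'I_(n i)) j))).
move=> /= ->; by apply: eq_bigr => -[i j].
Qed.

Lemma enorm_blk_le x i : enorm (blk x i) <= enorm x.
Proof.
rewrite /enorm ler_sqrt ?ip_ge0 // ip_sig (bigD1 i) //= lerDl.
by apply: sumr_ge0 => j _; apply: ip_ge0.
Qed.

Lemma seq_cvg_blk (u : nat -> T -> R) l i :
  seq_cvg u l -> seq_cvg (fun k => blk (u k) i) (blk l i).
Proof.
move=> h e e0; have [N hN] := h e e0; exists N => k hk.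
exact: le_lt_trans (enorm_blk_le _ i) (hN k hk).
Qed.

Lemma seq_cvg_join (u : nat -> T -> R) l :
  (forall i, seq_cvg (fun k => blk (u k) i) (blk l i)) -> seq_cvg u l.
Proof.
move=> h e e0.
set C : R := #|{: T}|%:R.
have C0 : 0 <= C by rewrite /C ler0n.
have e1 : 0 < e / (C + 1) by rewrite divr_gt0 //; lra.
have [N hN] := @eventually_all _ (fun i k => enorm (vsub (blk (u k) i) (blk l i)) < e / (C + 1)) (fun i => h i _ e1).
exists N => k hk.
apply: le_lt_trans (enorm_le_sumabs _) _.
apply: le_lt_trans (_ : _ <= \sum_(p : T) (e / (C + 1))) _.
  apply: ler_sum => -[i j] _.
  apply: ltW; apply: le_lt_trans _ (hN k hk i).
  exact: (abs_le_enorm (vsub (blk (u k) i) (blk l i)) j).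
rewrite sumr_const -mulr_natl -/C.
rewrite mulrA ltr_pdivrMr; last by lra.
nra.
Qed.

Definition upd (i : 'I_m) (z : 'I_(n i) -> R) x : T -> R :=
  fun p => match tag p =P i with
           | ReflectT e => z (etagged e)
           | ReflectF _ => x p end.
Arguments upd i z x : clear implicits.

Lemma blk_upd_eq i z x : blk (upd i z x) i = z.
Proof.
apply: functional_extensionality => j; rewrite /blk /upd /=.
case: (i =P i) => [e|//].
by rewrite (eq_irrelevance e (erefl i)).
Qed.

Lemma blk_upd_neq i j z x : j != i -> blk (upd i z x) j = blk x j.
Proof.
move=> ji; apply: functional_extensionality => k; rewrite /blk /upd /=.
case: (j =P i) => [e|//]; exfalso; by rewrite e eqxx in ji.
Qed.

Lemma ip_vsub0 (J : finType) (a b : J -> R) : ip a (vsub b b) = 0.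
Proof. by rewrite /ip big1 // => j _; rewrite /vsub subrr mulr0. Qed.

Lemma ip_upd i z x v : ip v (vsub (upd i z x) x) = ip (blk v i) (vsub z (blk x i)).
Proof.
rewrite ip_sig (bigD1 i) //= big1 ?addr0.
  change (ip (blk v i) (vsub (blk (upd i z x) i) (blk x i)) = ip (blk v i) (vsub z (blk x i))).
  by rewrite blk_upd_eq.
move=> j ji.
change (ip (blk v j) (vsub (blk (upd i z x) j) (blk x j)) = 0).
by rewrite blk_upd_neq // ip_vsub0.
Qed.

Lemma enorm_upd i z x : enorm (vsub (upd i z x) x) = enorm (vsub z (blk x i)).
Proof.
rewrite /enorm; congr Num.sqrt.
rewrite ip_sig (bigD1 i) //= big1 ?addr0.
  change (ip (vsub (blk (upd i z x) i) (blk x i)) (vsub (blk (upd i z x) i) (blk x i)) = ip (vsub z (blk x i)) (vsub z (blk x i))).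
  by rewrite blk_upd_eq.
move=> j ji.
change (ip (vsub (blk (upd i z x) j) (blk x j)) (vsub (blk (upd i z x) j) (blk x j)) = 0).
by rewrite blk_upd_neq // ip_vsub0.
Qed.

Variable F : forall i : 'I_m, ('I_(n i) -> R) -> \bar R.
Arguments F : clear implicits.

Lemma sep_sumE x : sep_sum F x = (\sum_i F i (blk x i))%E.
Proof. by []. Qed.

Lemma sep_sum_upd i z x :
  sep_sum F (upd i z x) = (F i z + \sum_(j | j != i) F j (blk x j))%E.
Proof.
rewrite sep_sumE (bigD1 i) //= blk_upd_eq; congr (_ + _)%E.
by apply: eq_bigr => j ji; rewrite blk_upd_neq.
Qed.

Lemma sep_sum_split i x :
  sep_sum F x = (F i (blk x i) + \sum_(j | j != i) F j (blk x j))%E.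
Proof. by rewrite sep_sumE (bigD1 i). Qed.

Lemma sep_sum_fin x : sep_sum F x \is a fin_num -> forall i, F i (blk x i) \is a fin_num.
Proof.
rewrite sep_sumE => /sum_fin_numP h i; exact: h i (mem_index_enum _) isT.
Qed.

Lemma sep_sum_finE x : (forall i, F i (blk x i) \is a fin_num) ->
  sep_sum F x = (\sum_i fine (F i (blk x i)))%:E.
Proof. by move=> h; rewrite sep_sumE EFin_sum_fine. Qed.

Lemma reg_sum_of x v :
  (forall i, reg_subdiff (F i) (blk x i) (blk v i)) -> reg_subdiff (sep_sum F) x v.
Proof.
move=> h.
have fx : forall i, F i (blk x i) \is a fin_num by move=> i; case: (h i).
split; first by rewrite sep_sum_finE.
move=> eps eps0.
set M : R := m%:R.
have M0 : 0 <= M by rewrite /M ler0n.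
set eps' := eps / (M + 1).
have e'0 : 0 < eps' by rewrite divr_gt0 //; lra.
have [D hD] := @dchoice 'I_m (fun _ => R) (fun i (d : R) => 0 < d /\ forall z, enorm (vsub z (blk x i)) < d ->
   (F i (blk x i) + (ip (blk v i) (vsub z (blk x i)) - eps' * enorm (vsub z (blk x i)))%:E <= F i z)%E)
   (fun i => match (h i).2 eps' e'0 with ex_intro2 d d0 hd => ex_intro _ d (conj d0 hd) end).
have [d d0 hd] := min_radius (fun i => (hD i).1).
exists d => // y hy.
have hi : forall i, (F i (blk x i) + (ip (blk v i) (vsub (blk y i) (blk x i)) - eps' * enorm (vsub (blk y i) (blk x i)))%:E <= F i (blk y i))%E.
  move=> i; apply: (hD i).2.
  exact: le_lt_trans (enorm_blk_le (vsub y x) i) (lt_le_trans hy (hd i)).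
have : (\sum_i (F i (blk x i) + (ip (blk v i) (vsub (blk y i) (blk x i)) - eps' * enorm (vsub (blk y i) (blk x i)))%:E) <= \sum_i F i (blk y i))%E.
  by apply: lee_sum => i _; exact: hi i.
rewrite big_split /= sumEFin -!sep_sumE => hs.
apply: le_trans hs; rewrite leeD2l // lee_fin.
rewrite sumrB (ip_sig v (vsub y x)) lerD2l lerN2 -mulr_sumr.
have : \sum_i enorm (vsub (blk y i) (blk x i)) <= M * enorm (vsub y x).
  apply: le_trans (_ : \sum_(i < m) enorm (vsub y x) <= _).
    by apply: ler_sum => i _; exact: (enorm_blk_le (vsub y x) i).
  by rewrite sumr_const card_ord mulr_natl.
move=> hs2.
have N0 := enorm_ge0 (vsub y x).
apply: le_trans (_ : eps' * (M * enorm (vsub y x)) <= _).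
  by apply: ler_wpM2l => //; apply: ltW.
rewrite mulrA /eps'; apply: ler_wpM2r => //.
rewrite mulrAC ler_pdivrMr; [nra | lra].
Qed.

Lemma reg_of_sum x v i :
  reg_subdiff (sep_sum F) x v -> reg_subdiff (F i) (blk x i) (blk v i).
Proof.
move=> [fx h].
have fS : (\sum_(j | j != i) F j (blk x j))%E \is a fin_num.
  by move: fx; rewrite (sep_sum_split i) fin_numD => /andP[].
split; first exact: sep_sum_fin.
move=> eps eps0; have [d d0 hd] := h eps eps0.
exists d => // z hz.
have := hd (upd i z x); rewrite enorm_upd => /(_ hz).
rewrite ip_upd sep_sum_upd (sep_sum_split i) addeAC leeD2rE //.
Qed.

Lemma lim_sum_of x v :
  (forall i, lim_subdiff (F i) (blk x i) (blk v i)) -> lim_subdiff (sep_sum F) x v.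
Proof.
move=> h.
have fx : forall i, F i (blk x i) \is a fin_num by move=> i; case: (h i).
split; first by rewrite sep_sum_finE.
have [xk hxk] := @dchoice 'I_m (fun i => nat -> 'I_(n i) -> R)
  (fun i xk => exists vk : nat -> 'I_(n i) -> R, [/\ seq_cvg xk (blk x i),
     (forall e : R, 0 < e -> exists N, forall k, (N <= k)%N ->
            (`|F i (xk k) - F i (blk x i)| < e%:E)%E),
     (forall k, reg_subdiff (F i) (xk k) (vk k)) & seq_cvg vk (blk v i)])
  (fun i => (h i).2).
have [vk hvk] := @dchoice 'I_m (fun i => nat -> 'I_(n i) -> R)
  (fun i vk => [/\ seq_cvg (xk i) (blk x i),
     (forall e : R, 0 < e -> exists N, forall k, (N <= k)%N ->
            (`|F i (xk i k) - F i (blk x i)| < e%:E)%E),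
     (forall k, reg_subdiff (F i) (xk i k) (vk k)) & seq_cvg vk (blk v i)])
  hxk.
exists (fun k p => xk (tag p) k (tagged p)), (fun k p => vk (tag p) k (tagged p)).
split.
- by apply: seq_cvg_join => i; case: (hvk i).
- move=> e e0.
  set M : R := m%:R.
  have M0 : 0 <= M by rewrite /M ler0n.
  set e' := e / (M + 1).
  have e'0 : 0 < e' by rewrite divr_gt0 //; lra.
  have [N hN] := @eventually_all _
    (fun i k => (`|F i (xk i k) - F i (blk x i)| < e'%:E)%E)
    (fun i => match hvk i with And4 _ hb _ _ => hb e' e'0 end).
  exists N => k hk.
  have fk : forall i, F i (xk i k) \is a fin_num.
    by move=> i; case: (hvk i) => _ _ hc _; case: (hc k).
  rewrite (sep_sum_finE (x := fun p => xk (tag p) k (tagged p))) //.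
  rewrite (sep_sum_finE fx) -EFinB /= lte_fin -sumrB.
  apply: le_lt_trans (ler_norm_sum _ _ _) _.
  apply: le_lt_trans (_ : _ <= \sum_(i < m) e') _.
    apply: ler_sum => i _; apply: ltW.
    exact: (ereal_abs_lt (fk i) (fx i) (hN k hk i)).
  rewrite sumr_const card_ord -mulr_natl -/M /e' mulrA ltr_pdivrMr; [nra|lra].
- by move=> k; apply: reg_sum_of => i; case: (hvk i) => _ _ hc _; exact: hc k.
- by apply: seq_cvg_join => i; case: (hvk i).
Qed.

Hypothesis hl : forall j, lsc (F j).

Lemma lim_of_sum x v i :
  lim_subdiff (sep_sum F) x v -> lim_subdiff (F i) (blk x i) (blk v i).
Proof.
move=> [fx [xk [vk [cx ca creg cv]]]].
have fxj := sep_sum_fin fx.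
split; first exact: fxj i.
exists (fun k => blk (xk k) i), (fun k => blk (vk k) i); split.
- exact: seq_cvg_blk.
- move=> e e0.
  set M : R := m%:R.
  have M0 : 0 <= M by rewrite /M ler0n.
  set d := e / (M + 1).
  have d0 : 0 < d by rewrite divr_gt0 //; lra.
  have hl' : forall j, exists N, forall k, (N <= k)%N ->
      ((fine (F j (blk x j)) - d)%:E < F j (blk (xk k) j))%E.
    move=> j.
    have hc : ((fine (F j (blk x j)) - d)%:E < F j (blk x j))%E.
      by rewrite -[X in (_ < X)%E](fineK (fxj j)) lte_fin; lra.
    have [r r0 hr] := @hl j (blk x j) _ hc.
    have [N hN] := seq_cvg_blk j cx r0.
    by exists N => k hk; apply: hr; exact: hN k hk.
  have [N1 hN1] := @eventually_all _ (fun j k =>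
      ((fine (F j (blk x j)) - d)%:E < F j (blk (xk k) j))%E) hl'.
  have [N2 hN2] := ca d d0.
  exists (maxn N1 N2) => k hk.
  have h2 := hN2 k (leq_trans (leq_maxr _ _) hk).
  have h1 := hN1 k (leq_trans (leq_maxl _ _) hk).
  have fS := fin_abs_lt fx h2.
  have fk := sep_sum_fin fS.
  have hab := ereal_abs_lt fS fx h2.
  rewrite (sep_sum_finE fk) (sep_sum_finE fxj) /= -sumrB in hab.
  rewrite -(fineK (fk i)) -(fineK (fxj i)) -EFinB /= lte_fin.
  set a := fun j => fine (F j (blk (xk k) j)).
  set b := fun j => fine (F j (blk x j)).
  have lb : forall j, b j - d < a j.
    by move=> j; have := h1 j; rewrite -(fineK (fk j)) lte_fin.
  have hab' : - d < \sum_j (a j - b j) < d by rewrite -ltr_norml.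
  rewrite ltr_norml; change (- e < a i - b i < e).
  have s1 : \sum_j (a j - b j) = (a i - b i) + \sum_(j | j != i) (a j - b j).
    by rewrite (bigD1 i).
  have s2 : - \sum_(j | j != i) d <= \sum_(j | j != i) (a j - b j).
    by rewrite -sumrN; apply: ler_sum => j _; have := lb j; lra.
  have s3 : \sum_(j < m) d = d + \sum_(j | j != i) d by rewrite (bigD1 i).
  have s4 : \sum_(j < m) d = M * d by rewrite sumr_const card_ord mulr_natl.
  have s5 : M * d < e by rewrite /d mulrA ltr_pdivrMr; [nra|lra].
  have lbi := lb i.
  have de : d <= e by rewrite /d ler_pdivrMr; [nra|lra].
  move: hab' s1 s2 s3 s4 s5 lbi d0 de.
  generalize (\sum_j (a j - b j)) (\sum_(j | j != i) (a j - b j)) (\sum_(j | j != i) d) (\sum_(j < m) d) (M * d) (a i) (b i) => S1 S2 S3 S4 Md ai bi.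
  clear; move=> /andP[h1 h2] *; apply/andP; split; lra.
- by move=> k; exact: reg_of_sum.
- exact: seq_cvg_blk.
Qed.

End D.
Arguments blk {R m n} x i.
Arguments upd {R m n} i z x.

Section G.
Variables (R : realType) (m : nat) (n : 'I_m -> nat).
Variable F : forall i : 'I_m, ('I_(n i) -> R) -> \bar R.
Arguments F : clear implicits.
Hypothesis hp : forall i, proper_valued (F i).
Local Notation T := {i : 'I_m & 'I_(n i)}.

Lemma sep_sum_proper : proper_valued (sep_sum F).
Proof.
move=> x; rewrite sep_sumE.
elim/big_ind: _ => //; last by move=> i _; exact: hp.
by move=> a b ha hb; rewrite adde_eq_ninfty negb_or ha hb.
Qed.

Lemma adde_def_proper (u w : \bar R) : u != -oo%E -> w != -oo%E -> (u +? w)%E.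
Proof. by case: u => [u| |] //; case: w. Qed.

Lemma sep_sum_convex : (forall i, convex_fun (F i)) -> convex_fun (sep_sum F).
Proof.
move=> hc x y t ht.
have t0 : 0 < t by case/andP: ht.
have t1 : 0 < 1 - t by case/andP: ht => _; rewrite subr_gt0.
have h1 : (sep_sum F (vcomb t x y) <= \sum_i (t%:E * F i (blk x i) + (1 - t)%:E * F i (blk y i)))%E.
  by rewrite sep_sumE; apply: lee_sum => i _; exact: hc i (blk x i) (blk y i) t ht.
apply: le_trans h1 _; rewrite !sep_sumE.
rewrite big_split /= !fin_num_sume_distrr //.
  by move=> i j _ _; apply: adde_def_proper; exact: hp.
by move=> i j _ _; apply: adde_def_proper; exact: hp.
Qed.

Lemma sep_sum_lsc : (forall i, lsc (F i)) -> lsc (sep_sum F).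
Proof.
move=> hl x c hcx.
set a := fun i => F i (blk x i).
set M : R := m%:R.
have M0 : 0 <= M by rewrite /M ler0n.
have [cc [hcc1 hcc2]] : exists cc : 'I_m -> R, (forall i, ((cc i)%:E < a i)%E) /\ c < \sum_i cc i.
  case: (boolP [forall i, a i \is a fin_num]) => hall.
    have fa : forall i, a i \is a fin_num by move=> i; exact: (forallP hall i).
    move: hcx; rewrite (sep_sum_finE fa) lte_fin => hcS.
    set S := \sum_i fine (a i) in hcS *.
    set g := (S - c) / (M + 1).
    have g0 : 0 < g by rewrite divr_gt0 //; lra.
    exists (fun i => fine (a i) - g); split.
      by move=> i; rewrite -[X in (_ < X)%E](fineK (fa i)) lte_fin; lra.
    rewrite sumrB sumr_const card_ord -mulr_natl -/M -/S.
    have : M * g < S - c by rewrite /g mulrA ltr_pdivrMr; [nra|lra].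
    lra.
  move: hall; rewrite negb_forall => /existsP[i0 hi0].
  have ai0 : a i0 = +oo%E.
    by move: hi0 (@hp i0 (blk x i0)); rewrite /a; case: (F i0 (blk x i0)).
  set K := `|c| + \sum_i `|fine (a i)| + M + 1.
  exists (fun i => if a i \is a fin_num then fine (a i) - 1 else K); split.
    move=> i; case: ifP => hf.
      by rewrite -[X in (_ < X)%E](fineK hf) lte_fin; lra.
    move: hf (@hp i (blk x i)); rewrite /a; case: (F i (blk x i)) => [r|_ _|//]; [by []|exact: ltry].
  rewrite (bigD1 i0) //= ai0 /=.
  have hK : 0 <= \sum_i `|fine (a i)| by apply: sumr_ge0.
  have lb : \sum_(i | i != i0) (- `|fine (a i)| - 1) <=
            \sum_(i | i != i0) (if a i \is a fin_num then fine (a i) - 1 else K).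
    apply: ler_sum => i _; case: ifP => _.
      by have := ler_norm (- fine (a i)); rewrite normrN; lra.
    have : 0 <= `|fine (a i)| by []. rewrite /K; have := normr_ge0 c; lra.
  have lb2 : \sum_i (- `|fine (a i)| - 1) <= \sum_(i | i != i0) (- `|fine (a i)| - 1).
    rewrite (bigD1 i0) //=; have := normr_ge0 (fine (a i0)); lra.
  have : \sum_i (- `|fine (a i)| - 1) = - \sum_i `|fine (a i)| - M.
    by rewrite sumrB sumrN sumr_const card_ord.
  have := ler_norm c.
  rewrite /K; lra.
have [D hD] := @dchoice 'I_m (fun _ => R) (fun i (d : R) => 0 < d /\ forall z, enorm (vsub z (blk x i)) < d -> ((cc i)%:E < F i z)%E)
   (fun i => match @hl i (blk x i) (cc i) (hcc1 i) with ex_intro2 d d0 hd => ex_intro _ d (conj d0 hd) end).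
have [d d0 hd] := min_radius (fun i => (hD i).1).
exists d => // y hy.
apply: lt_le_trans (_ : (\sum_i (cc i)%:E <= _)%E).
  by rewrite sumEFin lte_fin.
rewrite sep_sumE; apply: lee_sum => i _; apply: ltW; apply: (hD i).2.
exact: le_lt_trans (enorm_blk_le (vsub y x) i) (lt_le_trans hy (hd i)).
Qed.

End G.

Section Box.
Variables (R : realType) (I : finType).
Definition box (c : I -> R) (s : R) : (I -> R) -> Prop :=
  fun x => forall p, `|x p - c p| < s.

Lemma box_convex c s : convex_set (box c s).
Proof.
move=> x y t hx hy /andP[t0 t1] p; rewrite /vcomb.
have -> : t * x p + (1 - t) * y p - c p = t * (x p - c p) + (1 - t) * (y p - c p) by ring.
apply: le_lt_trans (ler_normD _ _) _.
have t1' : 0 <= 1 - t by rewrite subr_ge0.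
rewrite !normrM (ger0_norm t0) (ger0_norm t1').
have ha := hx p; have hb := hy p.
case: (ltrgt0P t) => ht; [|lra|].
  have h1 : 0 < t * (s - `|x p - c p|) by apply: mulr_gt0; lra.
  have h2 : 0 <= (1 - t) * (s - `|y p - c p|) by apply: mulr_ge0; lra.
  nra.
rewrite ht; lra.
Qed.

Lemma box_nbhd c s : 0 < s -> is_nbhd (box c s) c.
Proof.
move=> s0; exists s => // y hy p.
exact: le_lt_trans (abs_le_enorm (vsub y c) p) hy.
Qed.

Lemma box_enorm c s x : box c s x -> enorm (vsub x c) <= #|{: I}|%:R * s.
Proof.
move=> hx; apply: le_trans (enorm_le_sumabs _) _.
have h : \sum_p `|vsub x c p| <= \sum_(p : I) s.
  by apply: ler_sum => p _; apply: ltW; exact: hx p.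
by apply: le_trans h _; rewrite sumr_const mulr_natl.
Qed.

Lemma enorm_vsub0 (c : I -> R) : enorm (vsub c c) = 0.
Proof. by rewrite /enorm ip_vsub0 sqrtr0. Qed.

Lemma nbhd_center (U : (I -> R) -> Prop) c : is_nbhd U c -> U c.
Proof. by move=> [r r0 h]; apply: h; rewrite enorm_vsub0. Qed.

End Box.

Section H.
Local Unset Implicit Arguments.
Variables (R : realType) (m : nat) (n : 'I_m -> nat).
Variable f : forall i : 'I_m, ('I_(n i) -> R) -> \bar R.
Variables xb vb : forall i : 'I_m, 'I_(n i) -> R.
Variables (U V : forall i, ('I_(n i) -> R) -> Prop)
  (phi : forall i, ('I_(n i) -> R) -> \bar R) (eps : 'I_m -> R).
Hypothesis hp : forall i, proper_valued (f i).
Hypothesis hl : forall i, lsc (f i).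
Hypothesis heps : forall i, 0 < eps i.
Hypothesis hUV : forall i, convex_set (U i) /\ is_nbhd (U i) (xb i) /\
  convex_set (V i) /\ is_nbhd (V i) (vb i).
Hypothesis hphi : forall i, proper_valued (phi i) /\ lsc (phi i) /\ convex_fun (phi i).
Hypothesis hle : forall i x, U i x -> (phi i x <= f i x)%E.
Hypothesis heqv : forall i x v,
  (U i x /\ (f i x < f i (xb i) + (eps i)%:E)%E) /\ V i v /\ lim_subdiff (f i) x v
  <-> U i x /\ V i v /\ lim_subdiff (phi i) x v.
Hypothesis heqf : forall i x v, U i x -> (f i x < f i (xb i) + (eps i)%:E)%E ->
  V i v -> lim_subdiff (f i) x v -> f i x = phi i x.
Hypothesis hvx : forall i, lim_subdiff (f i) (xb i) (vb i).

Local Notation T := {i : 'I_m & 'I_(n i)}.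

Lemma core : var_convex (sep_sum f) (sep_join xb) (sep_join vb).
Proof.
have fxb : forall i, f i (xb i) \is a fin_num by move=> i; exact: (hvx i).1.
have phxb : forall i, phi i (xb i) = f i (xb i).
  move=> i; symmetry; apply: (heqf i (xb i) (vb i)).
  - exact: nbhd_center (hUV i).2.1.
  - by rewrite lteDl // lte_fin.
  - exact: nbhd_center (hUV i).2.2.2.
  - exact: hvx.
have pphi : forall i, proper_valued (phi i) by move=> i; case: (hphi i).
have lphi : forall i, lsc (phi i) by move=> i; case: (hphi i) => _ [].
have cphi : forall i, convex_fun (phi i) by move=> i; case: (hphi i) => _ [].
split; first exact: sep_sum_lsc.
split; first by apply: lim_sum_of => i; exact: hvx.
have [eta eta0 hetale] := min_radius heps.
set M : R := m%:R.
have M0 : 0 <= M by rewrite /M ler0n.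
set d := eta / (2 * (M + 1)).
have d0 : 0 < d by rewrite /d divr_gt0 //; lra.
have Md : M * d < eta / 2.
  rewrite /d mulrA ltr_pdivrMr; last by lra.
  have -> : eta / 2 * (2 * (M + 1)) = eta * M + eta by field.
  nra.
have [rL hrL] := @dchoice 'I_m (fun _ => R) (fun i r => 0 < r /\ forall z,
    enorm (vsub z (xb i)) < r -> ((fine (f i (xb i)) - d)%:E < f i z)%E)
  (fun i => match hl i (xb i) (fine (f i (xb i)) - d)
                   (ltac:(by rewrite -[X in (_ < X)%E](fineK (fxb i)) lte_fin; lra))
            with ex_intro2 r r0 hr => ex_intro _ r (conj r0 hr) end).
have [rC hrC] := @dchoice 'I_m (fun _ => R) (fun i r => 0 < r /\ forall x v,
    box (xb i) r x -> box (vb i) r v -> lim_subdiff (phi i) x v ->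
    (phi i x < phi i (xb i) + d%:E)%E)
  (fun i => match @convex_attentive R _ (phi i) (xb i) (vb i) (pphi i) (cphi i)
                 (ltac:(by rewrite phxb; exact: fxb)) d d0
            with ex_intro2 r r0 hr => ex_intro _ r (conj r0 hr) end).
have [rU hrU] := @dchoice 'I_m (fun _ => R) (fun i r => 0 < r /\ forall z,
    enorm (vsub z (xb i)) < r -> U i z)
  (fun i => match (hUV i).2.1 with ex_intro2 r r0 hr => ex_intro _ r (conj r0 hr) end).
have [rV hrV] := @dchoice 'I_m (fun _ => R) (fun i r => 0 < r /\ forall z,
    enorm (vsub z (vb i)) < r -> V i z)
  (fun i => match (hUV i).2.2.2 with ex_intro2 r r0 hr => ex_intro _ r (conj r0 hr) end).
set CT : R := #|{: T}|%:R.
have CT0 : 0 <= CT by rewrite /CT ler0n.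
set rho := fun i => Num.min (Num.min (Num.min (rU i) (rV i)) (rL i) / (CT + 1)) (rC i).
have rho0 : forall i, 0 < rho i.
  move=> i; rewrite /rho !lt_min (hrC i).1 andbT divr_gt0 //; last by lra.
  by rewrite !lt_min (hrU i).1 (hrV i).1 (hrL i).1.
have [s s0 hs] := min_radius rho0.
have hsC : forall i, s <= rC i.
  by move=> i; apply: le_trans (hs i) _; rewrite /rho ge_min lexx orbT.
have hsm : forall i, (CT + 1) * s <= Num.min (Num.min (rU i) (rV i)) (rL i).
  move=> i; rewrite mulrC -ler_pdivlMr; last by lra.
  by apply: le_trans (hs i) _; rewrite /rho ge_min lexx.
have hbn : forall (c x : T -> R), box c s x -> forall i,
    enorm (vsub (blk x i) (blk c i)) < Num.min (Num.min (rU i) (rV i)) (rL i).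
  move=> c x hx i.
  apply: le_lt_trans (enorm_blk_le (vsub x c) i) _.
  apply: le_lt_trans (box_enorm hx) _.
  apply: lt_le_trans (hsm i); lra.
have Hx : forall x, box (sep_join xb) s x -> forall i,
    [/\ U i (blk x i), ((fine (f i (xb i)) - d)%:E < f i (blk x i))%E &
        box (xb i) (rC i) (blk x i)].
  move=> x hx i; have := hbn _ _ hx i; rewrite !lt_min => /andP[/andP[hu _] hL].
  split.
  - exact: (hrU i).2.
  - exact: (hrL i).2.
  - by move=> j; apply: lt_le_trans (hsC i); exact: hx.
have Hv : forall v, box (sep_join vb) s v -> forall i,
    V i (blk v i) /\ box (vb i) (rC i) (blk v i).
  move=> v hv i; have := hbn _ _ hv i; rewrite !lt_min => /andP[/andP[_ hV] _].
  split; first exact: (hrV i).2.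
  by move=> j; apply: lt_le_trans (hsC i); exact: hv.
have Hfw : forall x v, box (sep_join xb) s x ->
    (sep_sum f x < sep_sum f (sep_join xb) + (eta / 2)%:E)%E ->
    lim_subdiff (sep_sum f) x v -> forall i,
    (f i (blk x i) < f i (xb i) + (eps i)%:E)%E /\ lim_subdiff (f i) (blk x i) (blk v i).
  move=> x v hx hlt hlim.
  have hli : forall i, lim_subdiff (f i) (blk x i) (blk v i).
    by move=> i; apply: lim_of_sum hlim.
  have fk : forall i, f i (blk x i) \is a fin_num by move=> i; exact: (hli i).1.
  move: hlt; rewrite (sep_sum_finE fk) (@sep_sum_finE _ _ _ f (sep_join xb) fxb).
  rewrite -EFinD lte_fin => hlt.
  move=> i; split; last exact: hli i.
  rewrite -(fineK (fk i)) -(fineK (fxb i)) -EFinD lte_fin.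
  set a := fun j => fine (f j (blk x j)).
  set b := fun j => fine (f j (xb j)).
  have lb : forall j, b j - d < a j.
    by move=> j; have [_ h _] := Hx x hx j; move: h; rewrite -(fineK (fk j)) lte_fin.
  have hlt' : \sum_j a j < \sum_j b j + eta / 2 by exact: hlt.
  change (a i < b i + eps i).
  have s1 : \sum_j a j - \sum_j b j = (a i - b i) + \sum_(j | j != i) (a j - b j).
    by rewrite -sumrB (bigD1 i).
  have s2 : - \sum_(j | j != i) d <= \sum_(j | j != i) (a j - b j).
    by rewrite -sumrN; apply: ler_sum => j _; have := lb j; lra.
  have s3 : \sum_(j < m) d = d + \sum_(j | j != i) d by rewrite (bigD1 i).
  have s4 : \sum_(j < m) d = M * d by rewrite sumr_const card_ord mulr_natl.
  have hei := hetale i.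
  move: hlt' s1 s2 s3 s4 Md hei d0.
  generalize (\sum_j a j) (\sum_j b j) (\sum_(j | j != i) (a j - b j))
    (\sum_(j | j != i) d) (\sum_(j < m) d) (M * d) (a i) (b i) (eps i) => A B S2 S3 S4 Mdd ai bi ei.
  clear; move=> *; lra.
exists (box (sep_join xb) s), (box (sep_join vb) s), (sep_sum phi), (eta / 2).
  lra.
split.
- split; first exact: box_convex.
  split; first exact: box_nbhd.
  split; first exact: box_convex.
  exact: box_nbhd.
- split; first exact: sep_sum_proper.
  split; first exact: sep_sum_lsc.
  exact: sep_sum_convex.
- move=> x hx; rewrite !sep_sumE; apply: lee_sum => i _; apply: hle.
  by case: (Hx x hx i).
- move=> x v; split.
    move=> [[hx hlt] [hv hlim]]; split; first exact: hx.
    split; first exact: hv.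
    apply: lim_sum_of => i.
    have [h1 h2] := Hfw x v hx hlt hlim i.
    have [hUi _ _] := Hx x hx i.
    have [hVi _] := Hv v hv i.
    by have [_ [_ ?]] := (heqv i (blk x i) (blk v i)).1 (conj (conj hUi h1) (conj hVi h2)).
  move=> [hx [hv hlim]].
  have hphil : forall i, lim_subdiff (phi i) (blk x i) (blk v i).
    by move=> i; apply: lim_of_sum hlim.
  have hloc : forall i, (f i (blk x i) < f i (xb i) + (eps i)%:E)%E /\
      lim_subdiff (f i) (blk x i) (blk v i).
    move=> i.
    have [hUi _ _] := Hx x hx i.
    have [hVi _] := Hv v hv i.
    by have [[_ ?] [_ ?]] := (heqv i (blk x i) (blk v i)).2 (conj hUi (conj hVi (hphil i))).
  split; last first.
    split; first exact: hv.
    by apply: lim_sum_of => i; exact: (hloc i).2.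
  split; first exact: hx.
  have fk : forall i, f i (blk x i) \is a fin_num by move=> i; exact: (hloc i).2.1.
  have hi : forall i, fine (f i (blk x i)) < fine (f i (xb i)) + d.
    move=> i.
    have [hUi _ hbx] := Hx x hx i.
    have [hVi hbv] := Hv v hv i.
    have := (hrC i).2 _ _ hbx hbv (hphil i).
    rewrite phxb -(heqf i (blk x i) (blk v i) hUi (hloc i).1 hVi (hloc i).2).
    by rewrite -(fineK (fk i)) -(fineK (fxb i)) -EFinD lte_fin.
  rewrite (sep_sum_finE fk) (@sep_sum_finE _ _ _ f (sep_join xb) fxb).
  rewrite -EFinD lte_fin.
  have h1 : \sum_i fine (f i (blk x i)) <= \sum_i (fine (f i (xb i)) + d).
    by apply: ler_sum => i _; apply: ltW; exact: hi i.
  rewrite big_split /= sumr_const card_ord -mulr_natl -/M in h1.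
  change (\sum_i fine (f i (blk x i)) < \sum_i fine (f i (xb i)) + eta / 2).
  apply: le_lt_trans h1 _; apply: ler_ltD => //.
- move=> x v hx hlt hv hlim; rewrite !sep_sumE; apply: eq_bigr => i _.
  have [h1 h2] := Hfw x v hx hlt hlim i.
  have [hUi _ _] := Hx x hx i.
  have [hVi _] := Hv v hv i.
  exact: heqf i (blk x i) (blk v i) hUi h1 hVi h2.
Qed.

End H.

Unset Implicit Arguments.
Local Close Scope ring_scope.

Theorem mainTheorem18 (R : realType) (m : nat) (n : 'I_m -> nat)
  (f : forall i : 'I_m, ('I_(n i) -> R) -> \bar R)
  (xb vb : forall i : 'I_m, 'I_(n i) -> R) :
  (forall i, proper_valued (f i)) ->
  (forall i, lsc (f i)) ->
  (forall i, var_convex (f i) (xb i) (vb i)) ->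
  var_convex (sep_sum f) (sep_join xb) (sep_join vb).
Proof.
move=> hp hl hv.
have [q hq] := @dchoice 'I_m (fun i => ((('I_(n i) -> R) -> Prop) * (('I_(n i) -> R) -> Prop) * (('I_(n i) -> R) -> \bar R) * R)%type)
  (fun i q => (0 < q.2)%R /\ [/\ (convex_set q.1.1.1 /\ is_nbhd q.1.1.1 (xb i) /\ convex_set q.1.1.2 /\ is_nbhd q.1.1.2 (vb i)),
        (proper_valued q.1.2 /\ lsc q.1.2 /\ convex_fun q.1.2),
        (forall x, q.1.1.1 x -> (q.1.2 x <= f i x)%E),
        (forall x v, (q.1.1.1 x /\ (f i x < f i (xb i) + q.2%:E)%E) /\ q.1.1.2 v /\ lim_subdiff (f i) x v <-> q.1.1.1 x /\ q.1.1.2 v /\ lim_subdiff q.1.2 x v) &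
        (forall x v, q.1.1.1 x -> (f i x < f i (xb i) + q.2%:E)%E -> q.1.1.2 v -> lim_subdiff (f i) x v -> f i x = q.1.2 x)])
  (fun i => match hv i with conj _ (conj _ (ex_intro U (ex_intro V (ex_intro phi (ex_intro2 e e0 H))))) => ex_intro _ (U, V, phi, e) (conj e0 H) end).
apply: (@core R m n f xb vb (fun i => (q i).1.1.1) (fun i => (q i).1.1.2)
          (fun i => (q i).1.2) (fun i => (q i).2)) => //.
- by move=> i; case: (hq i).
- by move=> i; case: (hq i) => _ [].
- by move=> i; case: (hq i) => _ [].
- by move=> i; case: (hq i) => _ [].
- by move=> i; case: (hq i) => _ [].
- by move=> i; case: (hq i) => _ [].
- by move=> i; case: (hv i) => _ [].
Qed.
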